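(* Fix an integer $d\ge1$ and let $Q$ be a Kazhdan subset of $\mathbb Z^d$, viewed as a subset of $\mathbb R^d$. Then: (1) for every increasing sequence $(W_n)_{n\ge1}$ of subsets of $\mathbb R^d$ with $\bigcup_{n\ge1}W_n=\mathbb R^d$, there exists $n\ge1$ such that $W_n\cup Q$ is a Kazhdan set in $\mathbb R^d$; (2) for every $\delta>0$, $B(0,\delta)\cup Q$ is a Kazhdan set in $\mathbb R^d$, where $B(0,\delta)$ is the open Euclidean ball of radius $\delta$ centered at $0$.
   Context: For a topological group $G$, a subset $Q$ is a Kazhdan set in $G$ if there exists $\varepsilon>0$ such that every strongly continuous unitary representation $\pi$ of $G$ on a complex Hilbert space having a vector $x$ with $\sup_{g\in Q}\|\pi(g)x-x\|<\varepsilon\|x\|$ has a non-zero $G$-invariant vector. $\mathbb Z^d$ is discrete and $\mathbb R^d$ carries its usual topology. *)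

(* Defs.v *)
From Stdlib Require Import Reals ZArith.
From Stdlib Require Vectors.Fin.
Open Scope R_scope.

(* ---------- Complex Hilbert spaces ----------
   A complex Hilbert space is encoded as a real Hilbert space (real inner
   product [hinner] = real part of the complex inner product) together with
   an orthogonal complex structure [hJ] (multiplication by i). *)
Record HilbertC : Type := {
  hcar :> Type;
  hzero : hcar;
  hadd : hcar -> hcar -> hcar;
  hopp : hcar -> hcar;
  hscal : R -> hcar -> hcar;
  hJ : hcar -> hcar;
  hinner : hcar -> hcar -> R;
  h_addA : forall x y z, hadd x (hadd y z) = hadd (hadd x y) z;
  h_addC : forall x y, hadd x y = hadd y x;
  h_add0 : forall x, hadd x hzero = x;
  h_addN : forall x, hadd x (hopp x) = hzero;
  h_scal1 : forall x, hscal 1 x = x;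
  h_scalA : forall a b x, hscal a (hscal b x) = hscal (a * b) x;
  h_scalDl : forall a b x, hscal (a + b) x = hadd (hscal a x) (hscal b x);
  h_scalDr : forall a x y, hscal a (hadd x y) = hadd (hscal a x) (hscal a y);
  h_Jadd : forall x y, hJ (hadd x y) = hadd (hJ x) (hJ y);
  h_Jscal : forall a x, hJ (hscal a x) = hscal a (hJ x);
  h_JJ : forall x, hJ (hJ x) = hopp x;
  h_innerC : forall x y, hinner x y = hinner y x;
  h_innerD : forall x y z, hinner (hadd x y) z = hinner x z + hinner y z;
  h_innerZ : forall a x y, hinner (hscal a x) y = a * hinner x y;
  h_innerJ : forall x y, hinner (hJ x) (hJ y) = hinner x y;
  h_inner_ge0 : forall x, 0 <= hinner x x;
  h_inner_eq0 : forall x, hinner x x = 0 -> x = hzero;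
  h_complete : forall u : nat -> hcar,
    (forall e, 0 < e -> exists N, forall m n, (N <= m)%nat -> (N <= n)%nat ->
        sqrt (hinner (hadd (u m) (hopp (u n))) (hadd (u m) (hopp (u n)))) < e) ->
    exists l, forall e, 0 < e -> exists N, forall n, (N <= n)%nat ->
        sqrt (hinner (hadd (u n) (hopp l)) (hadd (u n) (hopp l))) < e
}.

Definition hnorm (H : HilbertC) (x : H) : R := sqrt (hinner H x x).
Definition hsub (H : HilbertC) (x y : H) : H := hadd H x (hopp H y).

Definition unitary (H : HilbertC) (U : H -> H) : Prop :=
  (forall x y, U (hadd H x y) = hadd H (U x) (U y)) /\
  (forall a x, U (hscal H a x) = hscal H a (U x)) /\
  (forall x, U (hJ H x) = hJ H (U x)) /\
  (forall x y, hinner H (U x) (U y) = hinner H x y) /\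
  (forall y, exists x, U x = y).

Definition unitary_rep (G : Type) (gop : G -> G -> G) (ge : G)
  (H : HilbertC) (pi : G -> H -> H) : Prop :=
  (forall g, unitary H (pi g)) /\
  (forall x, pi ge x = x) /\
  (forall g h x, pi (gop g h) x = pi g (pi h x)).

Definition Kazhdan_gen (G : Type) (gop : G -> G -> G) (ge : G)
  (cont : forall H : HilbertC, (G -> H -> H) -> Prop) (Q : G -> Prop) : Prop :=
  exists eps, 0 < eps /\
  forall (H : HilbertC) (pi : G -> H -> H),
    unitary_rep G gop ge H pi -> cont H pi ->
    (exists x : H, exists c, 0 <= c /\ c < eps * hnorm H x /\
        forall g, Q g -> hnorm H (hsub H (pi g x) x) <= c) ->
    exists y : H, y <> hzero H /\ forall g, pi g y = y.

Definition Zd (d : nat) : Type := Fin.t d -> Z.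
Definition Rd (d : nat) : Type := Fin.t d -> R.

Definition Zd_add (d : nat) (u v : Zd d) : Zd d := fun i => (u i + v i)%Z.
Definition Zd_zero (d : nat) : Zd d := fun _ => 0%Z.
Definition Rd_add (d : nat) (u v : Rd d) : Rd d := fun i => u i + v i.
Definition Rd_zero (d : nat) : Rd d := fun _ => 0.
Definition Rd_sub (d : nat) (u v : Rd d) : Rd d := fun i => u i - v i.

Fixpoint sumFin (n : nat) : (Fin.t n -> R) -> R :=
  match n with
  | O => fun _ => 0
  | S m => fun f => f Fin.F1 + sumFin m (fun i => f (Fin.FS i))
  end.

Definition Rd_norm (d : nat) (u : Rd d) : R := sqrt (sumFin d (fun i => u i * u i)).

Definition Zd_to_Rd (d : nat) (z : Zd d) : Rd d := fun i => IZR (z i).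

(* Z^d is discrete: no continuity requirement *)
Definition no_cont (d : nat) (H : HilbertC) (pi : Zd d -> H -> H) : Prop := True.

Definition strongly_continuous (d : nat) (H : HilbertC) (pi : Rd d -> H -> H) : Prop :=
  forall (x : H) (g : Rd d) (e : R), 0 < e -> exists delta, 0 < delta /\
    forall h, Rd_norm d (Rd_sub d h g) < delta ->
      hnorm H (hsub H (pi h x) (pi g x)) < e.

Definition KazhdanZ (d : nat) (Q : Zd d -> Prop) : Prop :=
  Kazhdan_gen (Zd d) (Zd_add d) (Zd_zero d) (no_cont d) Q.

Definition KazhdanR (d : nat) (Q : Rd d -> Prop) : Prop :=
  Kazhdan_gen (Rd d) (Rd_add d) (Rd_zero d) (strongly_continuous d) Q.

Definition union_img (d : nat) (W : Rd d -> Prop) (Q : Zd d -> Prop) : Rd d -> Prop :=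
  fun x => W x \/ exists z, Q z /\ x = Zd_to_Rd d z.

Definition ball0 (d : nat) (delta : R) : Rd d -> Prop := fun x => Rd_norm d x < delta.

(* Main.v *)
Require Import Defs.
From Stdlib Require Import Reals Lra Lia ZArith ProofIrrelevance FunctionalExtensionality ClassicalEpsilon Classical.
Open Scope R_scope.

Arguments hzero {h}.
Arguments hadd {h}.
Arguments hopp {h}.
Arguments hscal {h}.
Arguments hJ {h}.
Arguments hinner {h}.
Arguments hnorm {H}.
Arguments hsub {H}.

Lemma add0l {H : HilbertC} (x : H) : hadd hzero x = x.
Proof. rewrite h_addC; apply h_add0. Qed.
Lemma addNl {H : HilbertC} (x : H) : hadd (hopp x) x = hzero.
Proof. rewrite h_addC; apply h_addN. Qed.
Lemma add_cancel_l {H : HilbertC} (a b c : H) : hadd a b = hadd a c -> b = c.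
Proof.
  intro E. rewrite <- (add0l b), <- (add0l c), <- (addNl a), <- !h_addA, E. reflexivity.
Qed.
Lemma opp_unique {H : HilbertC} (a b : H) : hadd a b = hzero -> b = hopp a.
Proof. intro E. apply (add_cancel_l a). rewrite E, h_addN. reflexivity. Qed.
Lemma opp_opp {H : HilbertC} (a : H) : hopp (hopp a) = a.
Proof. symmetry. apply opp_unique. apply addNl. Qed.
Lemma opp0 {H : HilbertC} : hopp (@hzero H) = hzero.
Proof. symmetry; apply opp_unique; apply h_add0. Qed.
Lemma opp_add {H : HilbertC} (a b : H) : hopp (hadd a b) = hadd (hopp a) (hopp b).
Proof.
  symmetry; apply opp_unique.
  rewrite (h_addC _ (hopp a)), h_addA, <- (h_addA _ a b), h_addN, h_add0, h_addN. reflexivity.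
Qed.
Lemma add4 {H : HilbertC} (a b c d : H) : hadd (hadd a b) (hadd c d) = hadd (hadd a c) (hadd b d).
Proof.
  rewrite <- !h_addA. f_equal. rewrite !h_addA. f_equal. apply h_addC.
Qed.
Lemma sub_add2 {H : HilbertC} (a b c d : H) :
  hsub (hadd a b) (hadd c d) = hadd (hsub a c) (hsub b d).
Proof. unfold hsub. rewrite opp_add. apply add4. Qed.
Lemma sub_chain {H : HilbertC} (a b c : H) : hsub a c = hadd (hsub a b) (hsub b c).
Proof.
  unfold hsub. rewrite <- h_addA, (h_addA _ (hopp b)), addNl, add0l. reflexivity.
Qed.
Lemma sub_opp {H : HilbertC} (a b : H) : hsub b a = hopp (hsub a b).
Proof. unfold hsub. rewrite opp_add, opp_opp, h_addC. reflexivity. Qed.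
Lemma sub_eq0 {H : HilbertC} (a b : H) : hsub a b = hzero -> a = b.
Proof. unfold hsub. intro E. rewrite <- (opp_opp b). apply opp_unique. rewrite h_addC. exact E. Qed.
Lemma subxx {H : HilbertC} (a : H) : hsub a a = hzero.
Proof. apply h_addN. Qed.
Lemma sub0 {H : HilbertC} (a : H) : hsub a hzero = a.
Proof. unfold hsub. rewrite opp0. apply h_add0. Qed.
Lemma add_sub {H : HilbertC} (a b : H) : hsub (hadd a b) a = b.
Proof. unfold hsub. rewrite (h_addC _ a), <- h_addA, h_addN, h_add0. reflexivity. Qed.
Lemma sub_add {H : HilbertC} (a b : H) : hadd b (hsub a b) = a.
Proof. unfold hsub. rewrite h_addC, <- h_addA, addNl, h_add0. reflexivity. Qed.

Lemma scal0 {H : HilbertC} (x : H) : hscal 0 x = hzero.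
Proof.
  apply (add_cancel_l (hscal 0 x)). rewrite h_add0, <- h_scalDl. f_equal. ring.
Qed.
Lemma scalN1 {H : HilbertC} (x : H) : hscal (-1) x = hopp x.
Proof.
  apply opp_unique. rewrite <- (h_scal1 _ x) at 1. rewrite <- h_scalDl.
  replace (1 + -1) with 0 by ring. apply scal0.
Qed.

Lemma inner0l {H : HilbertC} (y : H) : hinner hzero y = 0.
Proof.
  assert (E := h_innerD _ hzero hzero y). rewrite h_add0 in E. lra.
Qed.
Lemma innerNl {H : HilbertC} (x y : H) : hinner (hopp x) y = - hinner x y.
Proof.
  assert (E := h_innerD _ x (hopp x) y). rewrite h_addN, inner0l in E. lra.
Qed.
Lemma innerDr {H : HilbertC} (x y z : H) : hinner x (hadd y z) = hinner x y + hinner x z.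
Proof. rewrite !(h_innerC _ x). apply h_innerD. Qed.
Lemma innerZr {H : HilbertC} a (x y : H) : hinner x (hscal a y) = a * hinner x y.
Proof. rewrite !(h_innerC _ x). apply h_innerZ. Qed.
Lemma innerNr {H : HilbertC} (x y : H) : hinner x (hopp y) = - hinner x y.
Proof. rewrite !(h_innerC _ x). apply innerNl. Qed.
Lemma inner0r {H : HilbertC} (x : H) : hinner x hzero = 0.
Proof. rewrite h_innerC. apply inner0l. Qed.
Lemma innerBl {H : HilbertC} (x y z : H) : hinner (hsub x y) z = hinner x z - hinner y z.
Proof. unfold hsub. rewrite h_innerD, innerNl. ring. Qed.
Lemma innerBr {H : HilbertC} (x y z : H) : hinner z (hsub x y) = hinner z x - hinner z y.
Proof. unfold hsub. rewrite innerDr, innerNr. ring. Qed.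
Lemma innerJl {H : HilbertC} (x y : H) : hinner (hJ x) y = - hinner x (hJ y).
Proof. rewrite <- h_innerJ, h_JJ, innerNl. reflexivity. Qed.

Lemma N2D {H : HilbertC} (x y : H) :
  hinner (hadd x y) (hadd x y) = hinner x x + 2 * hinner x y + hinner y y.
Proof. rewrite !h_innerD, !innerDr, (h_innerC _ y x). ring. Qed.
Lemma N2B {H : HilbertC} (x y : H) :
  hinner (hsub x y) (hsub x y) = hinner x x - 2 * hinner x y + hinner y y.
Proof. rewrite !innerBl, !innerBr, (h_innerC _ y x). ring. Qed.
Lemma N2Z {H : HilbertC} a (x : H) : hinner (hscal a x) (hscal a x) = a * a * hinner x x.
Proof. rewrite h_innerZ, innerZr. ring. Qed.

Lemma hnorm_ge0 {H : HilbertC} (x : H) : 0 <= hnorm x.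
Proof. apply sqrt_pos. Qed.
Lemma hnorm_sq {H : HilbertC} (x : H) : hnorm x * hnorm x = hinner x x.
Proof. apply sqrt_sqrt, h_inner_ge0. Qed.
Lemma hnorm_zero {H : HilbertC} : hnorm (@hzero H) = 0.
Proof. unfold hnorm. rewrite inner0l. apply sqrt_0. Qed.
Lemma hnorm_eq0 {H : HilbertC} (x : H) : hnorm x = 0 -> x = hzero.
Proof. intro E. apply h_inner_eq0. rewrite <- hnorm_sq, E. ring. Qed.

Lemma sq_le_sqrt a b : 0 <= b -> a * a <= b * b -> a <= b.
Proof. intros. destruct (Rle_dec a b); auto. nra. Qed.

Lemma CS_sq {H : HilbertC} (x y : H) : hinner x y * hinner x y <= hinner x x * hinner y y.
Proof.
  destruct (Req_dec (hinner y y) 0) as [E|E].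
  - apply h_inner_eq0 in E. subst. rewrite inner0r, inner0l. lra.
  - assert (P := h_inner_ge0 _ y).
    set (t := hinner x y / hinner y y).
    assert (Q := h_inner_ge0 _ (hsub x (hscal t y))).
    rewrite N2B, N2Z, innerZr in Q. unfold t in Q.
    field_simplify in Q; [|lra].
    assert (0 < hinner y y) by lra.
    apply Rmult_le_compat_r with (r := hinner y y) in Q; [|lra].
    field_simplify in Q; lra.
Qed.

Lemma CS {H : HilbertC} (x y : H) : hinner x y <= hnorm x * hnorm y.
Proof.
  assert (A := hnorm_ge0 x). assert (B := hnorm_ge0 y).
  destruct (Rle_dec (hinner x y) 0). { nra. }
  apply sq_le_sqrt. nra.
  replace (hnorm x * hnorm y * (hnorm x * hnorm y)) with ((hnorm x * hnorm x) * (hnorm y * hnorm y)) by ring.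
  rewrite !hnorm_sq. apply CS_sq.
Qed.
Lemma CS_abs {H : HilbertC} (x y : H) : Rabs (hinner x y) <= hnorm x * hnorm y.
Proof.
  unfold Rabs. destruct (Rcase_abs _). 
  - assert (E := CS (hopp x) y). rewrite innerNl in E.
    unfold hnorm in *. rewrite innerNl, innerNr, Ropp_involutive in E. lra.
  - apply CS.
Qed.

Lemma hnorm_triangle {H : HilbertC} (x y : H) : hnorm (hadd x y) <= hnorm x + hnorm y.
Proof.
  apply sq_le_sqrt. pose proof (hnorm_ge0 x); pose proof (hnorm_ge0 y); lra.
  rewrite hnorm_sq, N2D.
  replace ((hnorm x + hnorm y) * (hnorm x + hnorm y)) with
    (hnorm x * hnorm x + 2 * (hnorm x * hnorm y) + hnorm y * hnorm y) by ring.
  rewrite !hnorm_sq. pose proof (CS x y). lra.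
Qed.
Lemma hnorm_opp {H : HilbertC} (x : H) : hnorm (hopp x) = hnorm x.
Proof. unfold hnorm. rewrite innerNl, innerNr, Ropp_involutive. reflexivity. Qed.
Lemma hnorm_subC {H : HilbertC} (x y : H) : hnorm (hsub x y) = hnorm (hsub y x).
Proof. rewrite (sub_opp x y), hnorm_opp. reflexivity. Qed.
Lemma dist_tri {H : HilbertC} (a b c : H) : hnorm (hsub a c) <= hnorm (hsub a b) + hnorm (hsub b c).
Proof. rewrite (sub_chain a b c). apply hnorm_triangle. Qed.
Lemma hnorm_sub_le {H : HilbertC} (a b : H) : hnorm (hsub a b) <= hnorm a + hnorm b.
Proof. unfold hsub. rewrite <- (hnorm_opp b). apply hnorm_triangle. Qed.
Lemma hnorm_scal {H : HilbertC} a (x : H) : hnorm (hscal a x) = Rabs a * hnorm x.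
Proof.
  unfold hnorm. rewrite N2Z, sqrt_mult_alt. rewrite <- sqrt_Rsqr_abs. reflexivity.
  apply Rle_0_sqr.
Qed.
Lemma hnorm_le_eps {H : HilbertC} (x : H) : (forall e, 0 < e -> hnorm x <= e) -> x = hzero.
Proof.
  intro E. apply hnorm_eq0. pose proof (hnorm_ge0 x).
  destruct (Req_dec (hnorm x) 0); auto.
  specialize (E (hnorm x / 2)). lra.
Qed.
Lemma nat_big (A : R) : exists n : nat, A < INR n.
Proof. destruct (INR_archimed 1 A) as [n Hn]; [lra|]. exists n. lra. Qed.

Lemma choice_nat {A : Type} (P : nat -> A -> Prop) :
  (forall n, exists a, P n a) -> exists f : nat -> A, forall n, P n (f n).
Proof.
  intro H. exists (fun n => proj1_sig (constructive_indefinite_description _ (H n))).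
  intro n. exact (proj2_sig (constructive_indefinite_description _ (H n))).
Qed.

Definition closedS {H : HilbertC} (K : H -> Prop) : Prop :=
  forall (u : nat -> H) l, (forall n, K (u n)) ->
  (forall e, 0 < e -> exists N, forall n, (N <= n)%nat -> hnorm (hsub (u n) l) < e) -> K l.

Lemma parallelogram {H : HilbertC} (a b : H) :
  hinner (hsub a b) (hsub a b) = 2 * hinner a a + 2 * hinner b b - hinner (hadd a b) (hadd a b).
Proof. rewrite N2B, N2D. ring. Qed.

Lemma min_norm {H : HilbertC} (K : H -> Prop) :
  (exists k, K k) -> (forall a b, K a -> K b -> K (hscal (/2) (hadd a b))) -> closedS K ->
  exists k0, K k0 /\ forall k, K k -> hnorm k0 <= hnorm k.
Proof.
  intros [k1 Hk1] Hmid Hcl.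
  set (E := fun r => exists k, K k /\ r = - hnorm k).
  destruct (completeness E) as [M [HM1 HM2]].
  { exists 0. intros r [k [_ ->]]. pose proof (hnorm_ge0 k). lra. }
  { exists (- hnorm k1). exists k1. auto. }
  set (m := - M).
  assert (Hlow : forall k, K k -> m <= hnorm k).
  { intros k Hk. assert (E (- hnorm k)) by (exists k; auto). apply HM1 in H0. unfold m. lra. }
  assert (Hm0 : 0 <= m).
  { assert (is_upper_bound E 0). { intros r0 [k [_ ->]]. pose proof (hnorm_ge0 k). lra. }
    apply HM2 in H0. unfold m. lra. }
  assert (Happ : forall e, 0 < e -> exists k, K k /\ hnorm k < m + e).
  { intros e He. apply NNPP. intro C.
    assert (is_upper_bound E (M - e)).
    { intros r [k [Hk ->]]. destruct (Rle_dec (- hnorm k) (M - e)); auto.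
      exfalso. apply C. exists k. split; auto. unfold m. lra. }
    apply HM2 in H0. lra. }
  destruct (choice_nat (fun n k => K k /\ hnorm k < m + / INR (S n))) as [u Hu].
  { intro n. apply Happ. apply Rinv_0_lt_compat. apply lt_0_INR. lia. }
  assert (Hcauchy : forall e, 0 < e -> exists N, forall p q, (N <= p)%nat -> (N <= q)%nat ->
            hnorm (hsub (u p) (u q)) < e).
  { intros e He.
    destruct (nat_big ((8 * m + 4) / (e * e))) as [N HN].
    exists N. intros p q Hp Hq.
    assert (HSN : 0 < INR (S N)) by (apply lt_0_INR; lia).
    assert (Hee : 0 < e * e) by nra.
    assert (Hbig : 8 * m + 4 < e * e * INR (S N)).
    { rewrite S_INR. unfold Rdiv in HN.
      apply Rmult_lt_compat_l with (r := e * e) in HN; [|lra].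
      rewrite <- Rmult_assoc, (Rmult_comm (e*e)), Rmult_assoc, Rinv_r in HN; lra. }
    set (t := / INR (S N)).
    assert (Ht0 : 0 < t) by (apply Rinv_0_lt_compat; lra).
    assert (Ht : t * (8 * m + 4) < e * e).
    { unfold t. apply Rmult_lt_reg_l with (INR (S N)); [lra|].
      rewrite <- Rmult_assoc, Rinv_r; lra. }
    assert (Ht1 : t <= 1). { unfold t. rewrite <- Rinv_1. apply Rinv_le_contravar. lra. rewrite S_INR. pose proof (pos_INR N). lra. }
    assert (Hinv : forall j, (N <= j)%nat -> / INR (S j) <= t).
    { intros j Hj. unfold t. apply Rinv_le_contravar; [lra|]. apply le_INR; lia. }
    destruct (Hu p) as [Kp Np]. destruct (Hu q) as [Kq Nq].
    pose proof (Hinv p Hp). pose proof (Hinv q Hq).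
    assert (Hmidn := Hlow _ (Hmid _ _ Kp Kq)).
    rewrite hnorm_scal in Hmidn. rewrite Rabs_right in Hmidn by lra.
    assert (Hs : hnorm (hadd (u p) (u q)) * hnorm (hadd (u p) (u q)) >= 4 * m * m).
    { pose proof (hnorm_ge0 (hadd (u p) (u q))). nra. }
    rewrite hnorm_sq in Hs.
    assert (Hd : hinner (hsub (u p) (u q)) (hsub (u p) (u q)) < e * e).
    { rewrite parallelogram. rewrite <- !hnorm_sq.
      pose proof (hnorm_ge0 (u p)). pose proof (hnorm_ge0 (u q)).
      assert (hnorm (u p) < m + t) by lra.
      assert (hnorm (u q) < m + t) by lra.
      assert (hnorm (u p) * hnorm (u p) <= (m + t) * (m + t)) by nra.
      assert (hnorm (u q) * hnorm (u q) <= (m + t) * (m + t)) by nra.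
      nra. }
    rewrite <- hnorm_sq in Hd. pose proof (hnorm_ge0 (hsub (u p) (u q))). nra. }
  destruct (h_complete H u Hcauchy) as [l Hl].
  exists l. assert (Kl : K l). { apply (Hcl u l); [intro n; apply Hu | exact Hl]. }
  split; auto. intros k Hk. pose proof (Hlow k Hk).
  enough (hnorm l <= m) by lra.
  destruct (Rle_dec (hnorm l) m) as [|C]; auto. exfalso.
  set (e := (hnorm l - m) / 3).
  assert (He : 0 < e) by (unfold e; lra).
  destruct (Hl e He) as [N1 HN1].
  destruct (nat_big (/ e)) as [N2 HN2].
  set (n := (N1 + N2)%nat).
  specialize (HN1 n ltac:(unfold n; lia)).
  destruct (Hu n) as [_ Hn].
  assert (/ INR (S n) < e).
  { assert (INR N2 <= INR (S n)) by (apply le_INR; unfold n; lia).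
    assert (0 < / e) by (apply Rinv_0_lt_compat; lra).
    rewrite <- (Rinv_inv e). apply Rinv_lt_contravar; nra. }
  pose proof (hnorm_triangle (hsub l (u n)) (u n)).
  rewrite (h_addC _ (hsub l (u n))), sub_add in H2. rewrite hnorm_subC in H2. change (hnorm (hsub (u n) l) < e) in HN1. unfold e in *. lra.
Qed.

Lemma min_unique {H : HilbertC} (K : H -> Prop) k0 k :
  (forall a b, K a -> K b -> K (hscal (/2) (hadd a b))) ->
  K k0 -> (forall k, K k -> hnorm k0 <= hnorm k) -> K k -> hnorm k <= hnorm k0 -> k = k0.
Proof.
  intros Hmid K0 Hmin Kk Hle.
  assert (Hm := Hmin _ (Hmid _ _ K0 Kk)).
  rewrite hnorm_scal, Rabs_right in Hm by lra.
  pose proof (Hmin k Kk).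
  assert (hnorm k = hnorm k0) by lra.
  assert (P := parallelogram k0 k).
  assert (hnorm (hadd k0 k) >= 2 * hnorm k0) by lra.
  pose proof (hnorm_ge0 k0).
  rewrite <- !hnorm_sq in P. rewrite H1 in P.
  pose proof (hnorm_ge0 (hsub k0 k)).
  assert (hnorm (hsub k0 k) = 0) by nra.
  symmetry. apply sub_eq0. apply hnorm_eq0. auto.
Qed.

Lemma scal_opp {H : HilbertC} a (v : H) : hscal a (hopp v) = hopp (hscal a v).
Proof.
  apply opp_unique. rewrite <- h_scalDr, h_addN.
  assert (E : hscal a (@hzero H) = hscal a (hscal 0 hzero)) by (rewrite scal0; reflexivity).
  rewrite E, h_scalA, Rmult_0_r. apply scal0.
Qed.
Lemma scal_sub {H : HilbertC} a (u v : H) : hscal a (hsub u v) = hsub (hscal a u) (hscal a v).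
Proof. unfold hsub. rewrite h_scalDr, scal_opp. reflexivity. Qed.
Lemma half_double {H : HilbertC} (x : H) : hscal (/2) (hadd x x) = x.
Proof.
  rewrite <- (h_scal1 _ x) at 1 2. rewrite <- h_scalDl, h_scalA.
  replace (/2 * (1+1)) with 1 by field. apply h_scal1.
Qed.
Lemma subsub {H : HilbertC} (x a b : H) : hsub (hsub x a) (hsub x b) = hsub b a.
Proof.
  unfold hsub. rewrite opp_add, opp_opp, add4, h_addN, add0l, h_addC. reflexivity.
Qed.
Lemma sub_sub_add {H : HilbertC} (x a b : H) : hsub x (hadd a b) = hsub (hsub x a) b.
Proof. unfold hsub. rewrite opp_add, h_addA. reflexivity. Qed.

Lemma sub_swap {H : HilbertC} (x a b : H) : hsub (hsub x a) b = hsub (hsub x b) a.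
Proof. unfold hsub. rewrite <- !h_addA, (h_addC _ (hopp a)). reflexivity. Qed.

Lemma orth_decomp {H : HilbertC} (M : H -> Prop) :
  M hzero -> (forall a b, M a -> M b -> M (hadd a b)) -> (forall t a, M a -> M (hscal t a)) ->
  closedS M ->
  forall x, exists m r, M m /\ x = hadd m r /\ forall w, M w -> hinner r w = 0.
Proof.
  intros M0 MD MZ Mcl x.
  set (K := fun v => exists m, M m /\ v = hsub x m).
  destruct (min_norm K) as [r [[m0 [Mm0 ->]] Hmin]].
  - exists (hsub x hzero). exists hzero. auto.
  - intros a b [m1 [H1 ->]] [m2 [H2 ->]]. exists (hscal (/2) (hadd m1 m2)). split.
    + apply MZ, MD; auto.
    + rewrite <- (half_double x) at 3. rewrite <- scal_sub. f_equal.
      rewrite sub_add2. reflexivity.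
  - intros u l Hu Hl. apply choice_nat in Hu. destruct Hu as [mm Hmm].
    exists (hsub x l). split.
    + apply (Mcl mm). intro n; apply Hmm.
      intros e He. destruct (Hl e He) as [N HN]. exists N. intros n Hn.
      specialize (HN n Hn). destruct (Hmm n) as [_ E]. rewrite E in HN.
      rewrite hnorm_subC, sub_swap. exact HN.
    + unfold hsub. rewrite opp_add, opp_opp, h_addA, h_addN, add0l. reflexivity.
  - exists m0, (hsub x m0). split; auto. split.
    + rewrite sub_add. reflexivity.
    + intros w Mw. set (r := hsub x m0) in *.
      set (a := hinner r w). set (n := hinner w w).
      assert (n0 : 0 <= n) by apply h_inner_ge0.
      set (t := a / (n + 1)).
      assert (Kt : K (hsub r (hscal t w))).
      { exists (hadd m0 (hscal t w)). split. apply MD; auto. unfold r. rewrite sub_sub_add. reflexivity. }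
      specialize (Hmin _ Kt).
      assert (Hsq : hnorm r * hnorm r <= hnorm (hsub r (hscal t w)) * hnorm (hsub r (hscal t w))).
      { pose proof (hnorm_ge0 r). nra. }
      rewrite !hnorm_sq, N2B, N2Z, innerZr in Hsq. fold a n in Hsq.
      unfold t in Hsq.
      assert (Hq : 0 <= a * a * (n - 2 * (n + 1)) / ((n + 1) * (n + 1))).
      { replace (a * a * (n - 2 * (n + 1)) / ((n + 1) * (n + 1))) with
          (- 2 * (a / (n + 1) * a) + a / (n + 1) * (a / (n + 1)) * n) by (field; lra). lra. }
      assert (0 < (n+1)*(n+1)) by nra.
      assert (0 <= a * a * (n - 2 * (n + 1))).
      { apply Rmult_le_compat_r with (r := (n+1)*(n+1)) in Hq; [|lra].
        field_simplify in Hq; lra. }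
      nra.
Qed.

Lemma unit_zero {H : HilbertC} (U : H -> H) : unitary H U -> U hzero = hzero.
Proof.
  intros [Ua _]. apply (add_cancel_l (U hzero)). rewrite <- Ua, !h_add0. reflexivity.
Qed.
Lemma unit_opp {H : HilbertC} (U : H -> H) x : unitary H U -> U (hopp x) = hopp (U x).
Proof.
  intros HU. apply opp_unique. rewrite <- (proj1 HU), h_addN. apply unit_zero. exact HU.
Qed.
Lemma unit_sub {H : HilbertC} (U : H -> H) a b : unitary H U -> U (hsub a b) = hsub (U a) (U b).
Proof. intro HU. unfold hsub. rewrite (proj1 HU), unit_opp; auto. Qed.
Lemma unit_norm {H : HilbertC} (U : H -> H) x : unitary H U -> hnorm (U x) = hnorm x.
Proof. intros (_&_&_&Hi&_). unfold hnorm. rewrite Hi. reflexivity. Qed.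
Lemma unit_dist {H : HilbertC} (U : H -> H) a b : unitary H U -> hnorm (hsub (U a) (U b)) = hnorm (hsub a b).
Proof. intro HU. rewrite <- unit_sub, unit_norm; auto. Qed.

Lemma sig_ext {A : Type} {P : A -> Prop} (a b : {x : A | P x}) : proj1_sig a = proj1_sig b -> a = b.
Proof. destruct a, b; simpl; intro E; subst. f_equal. apply proof_irrelevance. Qed.

Definition perpP {H : HilbertC} (M : H -> Prop) (v : H) : Prop := forall w, M w -> hinner v w = 0.

Lemma zero_of_small a c : 0 <= c -> (forall e, 0 < e -> Rabs a <= e * c) -> a = 0.
Proof.
  intros Hc He. destruct (Req_dec a 0); auto. exfalso.
  assert (0 < Rabs a) by (apply Rabs_pos_lt; auto).
  specialize (He (Rabs a / (2 * (c + 1))) ltac:(apply Rdiv_lt_0_compat; lra)).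
  assert (Rabs a / (2 * (c + 1)) * c < Rabs a).
  { apply Rmult_lt_reg_r with (2 * (c+1)); [lra|]. field_simplify; nra. }
  lra.
Qed.

Lemma perp0 {H : HilbertC} (M : H -> Prop) : perpP M hzero.
Proof. intros w _. apply inner0l. Qed.
Lemma perpD {H : HilbertC} (M : H -> Prop) a b : perpP M a -> perpP M b -> perpP M (hadd a b).
Proof. intros Pa Pb w Mw. rewrite h_innerD, Pa, Pb; auto. ring. Qed.
Lemma perpN {H : HilbertC} (M : H -> Prop) a : perpP M a -> perpP M (hopp a).
Proof. intros Pa w Mw. rewrite innerNl, Pa; auto. ring. Qed.
Lemma perpZ {H : HilbertC} (M : H -> Prop) t a : perpP M a -> perpP M (hscal t a).
Proof. intros Pa w Mw. rewrite h_innerZ, Pa; auto. ring. Qed.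
Lemma perpJ {H : HilbertC} (M : H -> Prop) (MJ : forall w, M w -> M (hJ w)) a :
  perpP M a -> perpP M (hJ a).
Proof. intros Pa w Mw. rewrite innerJl, Pa; auto. ring. Qed.

Definition perp_space (H : HilbertC) (M : H -> Prop) (MJ : forall w, M w -> M (hJ w)) : HilbertC.
Proof.
  refine (@Build_HilbertC {v : H | perpP M v}
    (exist _ hzero (perp0 M))
    (fun a b => exist _ (hadd (proj1_sig a) (proj1_sig b)) (perpD M _ _ (proj2_sig a) (proj2_sig b)))
    (fun a => exist _ (hopp (proj1_sig a)) (perpN M _ (proj2_sig a)))
    (fun t a => exist _ (hscal t (proj1_sig a)) (perpZ M t _ (proj2_sig a)))
    (fun a => exist _ (hJ (proj1_sig a)) (perpJ M MJ _ (proj2_sig a)))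
    (fun a b => hinner (proj1_sig a) (proj1_sig b))
    _ _ _ _ _ _ _ _ _ _ _ _ _ _ _ _ _ _).
  - intros; apply sig_ext; apply h_addA.
  - intros; apply sig_ext; apply h_addC.
  - intros; apply sig_ext; apply h_add0.
  - intros; apply sig_ext; apply h_addN.
  - intros; apply sig_ext; apply h_scal1.
  - intros; apply sig_ext; apply h_scalA.
  - intros; apply sig_ext; apply h_scalDl.
  - intros; apply sig_ext; apply h_scalDr.
  - intros; apply sig_ext; apply h_Jadd.
  - intros; apply sig_ext; apply h_Jscal.
  - intros; apply sig_ext; apply h_JJ.
  - intros; apply h_innerC.
  - intros; simpl; apply h_innerD.
  - intros; simpl; apply h_innerZ.
  - intros; simpl; apply h_innerJ.
  - intros; apply h_inner_ge0.
  - intros x E; apply sig_ext; apply h_inner_eq0; exact E.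
  - intros u Hu.
    destruct (h_complete H (fun n => proj1_sig (u n)) Hu) as [l Hl].
    assert (Pl : perpP M l).
    { intros w Mw. apply (zero_of_small _ (hnorm w)). apply hnorm_ge0.
      intros e He. destruct (Hl e He) as [N HN]. specialize (HN N (le_n _)).
      change (hnorm (hsub (proj1_sig (u N)) l) < e) in HN.
      assert (E : hinner l w = - hinner (hsub (proj1_sig (u N)) l) w).
      { rewrite innerBl, (proj2_sig (u N) w Mw). ring. }
      rewrite E, Rabs_Ropp. eapply Rle_trans. apply CS_abs.
      pose proof (hnorm_ge0 w). nra. }
    exists (exist _ l Pl). exact Hl.
Defined.

Lemma kaz_perp (G : Type) (gop : G -> G -> G) (ge : G)
  (cont : forall H : HilbertC, (G -> H -> H) -> Prop) (Q : G -> Prop) eps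
  (Hcont : forall H pi, cont H pi)
  (HK : forall (H : HilbertC) (pi : G -> H -> H),
    unitary_rep G gop ge H pi -> cont H pi ->
    (exists x : H, exists c, 0 <= c /\ c < eps * hnorm x /\
        forall g, Q g -> hnorm (hsub (pi g x) x) <= c) ->
    exists y : H, y <> hzero /\ forall g, pi g y = y)
  (H : HilbertC) (pi : G -> H -> H) (Hpi : unitary_rep G gop ge H pi)
  (v : H) (c : R) :
  perpP (fun w => forall g, pi g w = w) v -> 0 <= c ->
  (forall q, Q q -> hnorm (hsub (pi q v) v) <= c) -> eps * hnorm v <= c.
Proof.
  intros Pv Hc Hq. destruct (Rle_dec (eps * hnorm v) c) as [|C]; auto. exfalso.
  destruct Hpi as [Hun [Hid Hmul]].
  set (M := fun w => forall g, pi g w = w).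
  assert (MJ : forall w, M w -> M (hJ w)).
  { intros w Mw g. destruct (Hun g) as (_&_&HJ&_). rewrite HJ, Mw. reflexivity. }
  set (S := perp_space H M MJ).
  assert (Ppres : forall g a, perpP M a -> perpP M (pi g a)).
  { intros g a Pa w Mw. rewrite <- (Mw g). destruct (Hun g) as (_&_&_&Hi&_). rewrite Hi. apply Pa; auto. }
  set (rho := fun g (a : S) => (exist _ (pi g (proj1_sig a)) (Ppres g _ (proj2_sig a)) : S)).
  destruct (HK S rho) as [y [Hy0 Hy]].
  - split; [|split].
    + intro g. destruct (Hun g) as (Ua&Uz&UJ&Ui&Us). split; [|split; [|split; [|split]]].
      * intros a b. apply sig_ext. simpl. apply Ua.
      * intros a b. apply sig_ext. simpl. apply Uz.
      * intros a. apply sig_ext. simpl. apply UJ.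
      * intros a b. simpl. apply Ui.
      * intros y. destruct (Us (proj1_sig y)) as [x Ex].
        assert (Px : perpP M x).
        { intros w Mw. rewrite <- Ui, Ex, (Mw g). apply (proj2_sig y). auto. }
        exists (exist _ x Px). apply sig_ext. simpl. exact Ex.
    + intros a. apply sig_ext. simpl. apply Hid.
    + intros g h a. apply sig_ext. simpl. apply Hmul.
  - apply Hcont.
  - exists (exist _ v Pv), c. split; auto. split.
    + change (c < eps * hnorm v). lra.
    + intros g Qg. exact (Hq g Qg).
  - apply Hy0. apply sig_ext. simpl.
    assert (My : M (proj1_sig y)). { intro g. rewrite <- (Hy g) at 2. reflexivity. }
    apply h_inner_eq0. apply (proj2_sig y). exact My.
Qed.

Definition Rd_opp (d : nat) (u : Rd d) : Rd d := fun i => - u i.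

Lemma rep_zero d (H : HilbertC) (pi : Rd d -> H -> H) x : unitary_rep (Rd d) (Rd_add d) (Rd_zero d) H pi -> pi (Rd_zero d) x = x.
Proof. intros (_&Hid&_). apply Hid. Qed.

Lemma rep_shift d (H : HilbertC) (pi : Rd d -> H -> H) (t s : Rd d) x : unitary_rep (Rd d) (Rd_add d) (Rd_zero d) H pi ->
  pi t (pi (Rd_sub d s t) x) = pi s x.
Proof.
  intros (_&_&Hm). rewrite <- Hm. f_equal. unfold Rd_add, Rd_sub. apply functional_extensionality. intro i. ring.
Qed.

Lemma stepB d (H : HilbertC) (pi : Rd d -> H -> H) (y : H) C :
  unitary_rep (Rd d) (Rd_add d) (Rd_zero d) H pi ->
  0 <= C -> C < hnorm y -> (forall t, hnorm (hsub (pi t y) y) <= C) ->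
  exists k : H, k <> hzero /\ forall g, pi g k = k.
Proof.
  intros Hpi HC0 HCy Ht.
  assert (Hun : forall g, unitary H (pi g)) by apply Hpi.
  set (beta := hinner y y - C * C / 2).
  assert (Hb : 0 < beta). { unfold beta. rewrite <- hnorm_sq. nra. }
  set (K := fun k => forall s, beta <= hinner k (pi s y)).
  destruct (min_norm K) as [k0 [K0 Hmin]].
  - exists y. intro s. specialize (Ht s).
    assert (E := N2B (pi s y) y). rewrite <- !hnorm_sq in E. rewrite (unit_norm (pi s) y (Hun s)) in E.
    pose proof (hnorm_ge0 (hsub (pi s y) y)).
    assert (hnorm (hsub (pi s y) y) * hnorm (hsub (pi s y) y) <= C * C) by nra.
    rewrite (h_innerC _ y). unfold beta. rewrite <- hnorm_sq. lra.
  - intros a b Ka Kb s. rewrite h_innerZ, h_innerD. specialize (Ka s). specialize (Kb s). lra.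
  - intros u l Hu Hl s.
    destruct (Rle_dec beta (hinner l (pi s y))) as [|C']; auto. exfalso.
    set (e := (beta - hinner l (pi s y)) / (2 * (hnorm y + 1))).
    assert (He : 0 < e). { unfold e. pose proof (hnorm_ge0 y). apply Rdiv_lt_0_compat; lra. }
    destruct (Hl e He) as [N HN]. specialize (HN N (le_n _)).
    assert (E : hinner l (pi s y) = hinner (u N) (pi s y) - hinner (hsub (u N) l) (pi s y)).
    { rewrite innerBl. ring. }
    pose proof (CS (hsub (u N) l) (pi s y)). rewrite (unit_norm _ _ (Hun s)) in H0.
    specialize (Hu N s). pose proof (hnorm_ge0 y).
    assert (hnorm (hsub (u N) l) * hnorm y <= e * hnorm y) by (pose proof (hnorm_ge0 (hsub (u N) l)); nra).
    assert (e * hnorm y < beta - hinner l (pi s y)).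
    { unfold e. apply Rmult_lt_reg_r with (2 * (hnorm y + 1)); [lra|]. field_simplify; nra. }
    lra.
  - exists k0. split.
    + intro E. subst k0. specialize (K0 (Rd_zero d)). rewrite inner0l in K0. lra.
    + intro g. apply (min_unique K); auto.
      * intros a b Ka Kb s. rewrite h_innerZ, h_innerD. specialize (Ka s). specialize (Kb s). lra.
      * intro s. rewrite <- (rep_shift d H pi g s y Hpi). destruct (Hun g) as (_&_&_&Hi&_). rewrite Hi. apply K0.
      * rewrite (unit_norm _ _ (Hun g)). lra.
Qed.

Definition nscal (d : nat) (n : nat) (s : Rd d) : Rd d := fun i => INR n * s i.

Lemma iter_bound d (H : HilbertC) (pi : Rd d -> H -> H) (y : H) s n : unitary_rep (Rd d) (Rd_add d) (Rd_zero d) H pi ->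
  hnorm (hsub (pi (nscal d n s) y) y) <= INR n * hnorm (hsub (pi s y) y).
Proof.
  intro Hpi. induction n.
  - simpl. replace (nscal d 0 s) with (Rd_zero d).
    + rewrite rep_zero, subxx, hnorm_zero by auto. lra.
    + unfold nscal, Rd_zero. apply functional_extensionality; intro i; simpl; ring.
  - replace (nscal d (S n) s) with (Rd_add d s (nscal d n s)).
    + destruct Hpi as (Hun&Hid&Hm). rewrite Hm.
      eapply Rle_trans. apply (dist_tri _ (pi s y)).
      rewrite (unit_dist _ _ _ (Hun s)). rewrite S_INR. lra.
    + unfold nscal, Rd_add. apply functional_extensionality; intro i; rewrite S_INR; ring.
Qed.

Lemma Zd_to_Rd_add d a b : Zd_to_Rd d (Zd_add d a b) = Rd_add d (Zd_to_Rd d a) (Zd_to_Rd d b).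
Proof. unfold Zd_to_Rd, Zd_add, Rd_add. apply functional_extensionality; intro i. apply plus_IZR. Qed.
Lemma Zd_to_Rd_zero d : Zd_to_Rd d (Zd_zero d) = Rd_zero d.
Proof. reflexivity. Qed.

Lemma restrict_rep d (H : HilbertC) (pi : Rd d -> H -> H) : unitary_rep (Rd d) (Rd_add d) (Rd_zero d) H pi ->
  unitary_rep (Zd d) (Zd_add d) (Zd_zero d) H (fun z => pi (Zd_to_Rd d z)).
Proof.
  intros (Hun&Hid&Hm). split; [|split].
  - intro g. apply Hun.
  - intro x. rewrite Zd_to_Rd_zero. apply Hid.
  - intros g h x. rewrite Zd_to_Rd_add. apply Hm.
Qed.

Lemma decomp_eq {H : HilbertC} (U : H -> H) x0 x1 : unitary H U -> U x0 = x0 ->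
  hsub (U (hadd x0 x1)) (hadd x0 x1) = hsub (U x1) x1.
Proof.
  intros HU E. rewrite (proj1 HU), sub_add2, E, subxx, add0l. reflexivity.
Qed.

Lemma decomp_eq2 {H : HilbertC} (U : H -> H) x0 x1 : unitary H U ->
  hsub (U x0) x0 = hsub (hsub (U (hadd x0 x1)) (hadd x0 x1)) (hsub (U x1) x1).
Proof.
  intros HU. rewrite (proj1 HU), sub_add2. symmetry.
  unfold hsub at 1. rewrite <- h_addA, h_addN, h_add0. reflexivity.
Qed.

Lemma frac_decomp (t : R) : exists z : Z, 0 <= t - IZR z < 1.
Proof.
  destruct (archimed t) as [A B]. exists (up t - 1)%Z. rewrite minus_IZR. simpl. lra.
Qed.

Lemma main_lemma d (Q : Zd d -> Prop) eps (Heps : 0 < eps)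
  (HK : forall (H : HilbertC) (pi : Zd d -> H -> H),
    unitary_rep (Zd d) (Zd_add d) (Zd_zero d) H pi -> no_cont d H pi ->
    (exists x : H, exists c, 0 <= c /\ c < eps * hnorm x /\
        forall g, Q g -> hnorm (hsub (pi g x) x) <= c) ->
    exists y : H, y <> hzero /\ forall g, pi g y = y)
  r (Hr : 0 < r) :
  exists eps', 0 < eps' /\ forall (H : HilbertC) (pi : Rd d -> H -> H),
    unitary_rep (Rd d) (Rd_add d) (Rd_zero d) H pi ->
    forall x c, 0 <= c -> c < eps' * hnorm x ->
    (forall q, Q q -> hnorm (hsub (pi (Zd_to_Rd d q) x) x) <= c) ->
    (forall t, (forall i, Rabs (t i) < r) -> hnorm (hsub (pi t x) x) <= 2 * c) ->
    exists y : H, y <> hzero /\ forall g, pi g y = y.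
Proof.
  destruct (nat_big (/ r)) as [K HKr].
  assert (HK0 : 0 < INR K). { assert (0 < / r) by (apply Rinv_0_lt_compat; lra). lra. }
  assert (HKr' : / INR K < r).
  { rewrite <- (Rinv_inv r). apply Rinv_lt_contravar; auto. apply Rmult_lt_0_compat; auto. apply Rinv_0_lt_compat; lra. }
  set (A := 2 * INR K + 2 * INR K / eps + / eps + 1).
  assert (HA : 0 < A). { unfold A. assert (0 < / eps) by (apply Rinv_0_lt_compat; lra).
    assert (0 < INR K / eps) by (apply Rdiv_lt_0_compat; lra). lra. }
  exists (/ A). split. apply Rinv_0_lt_compat; auto.
  intros H pi Hpi x c Hc0 Hcx HQx Hcube.
  assert (Hun : forall g, unitary H (pi g)) by apply Hpi.
  assert (Hsig := restrict_rep d H pi Hpi).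
  set (M0 := fun w => forall z, pi (Zd_to_Rd d z) w = w).
  destruct (orth_decomp M0) with (x := x) as [x0 [x1 [Mx0 [Ex Px1]]]].
  - intro z. apply unit_zero, Hun.
  - intros a b Ma Mb z. rewrite (proj1 (Hun _)). rewrite (Ma z), (Mb z). reflexivity.
  - intros s a Ma z. rewrite (proj1 (proj2 (Hun _))). rewrite (Ma z). reflexivity.
  - intros u l Hu Hl z. apply sub_eq0, hnorm_le_eps. intros e He.
    destruct (Hl (e/2) ltac:(lra)) as [N HN]. specialize (HN N (le_n _)).
    eapply Rle_trans. apply (dist_tri _ (pi (Zd_to_Rd d z) (u N))).
    rewrite (unit_dist _ l (u N) (Hun _)).
    rewrite (Hu N z). rewrite (hnorm_subC l). lra.
  - assert (Hx1 : eps * hnorm x1 <= c).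
    { apply (kaz_perp (Zd d) (Zd_add d) (Zd_zero d) (no_cont d) Q eps (fun _ _ => I) HK H (fun z => pi (Zd_to_Rd d z)) Hsig x1 c); auto.
      intros q Qq. specialize (HQx q Qq). rewrite Ex in HQx. simpl.
      rewrite (decomp_eq _ _ _ (Hun _) (Mx0 q)) in HQx. exact HQx. }
    set (ce := c / eps).
    assert (Hce : hnorm x1 <= ce).
    { unfold ce. apply Rmult_le_reg_l with eps; auto. field_simplify; lra. }
    assert (Hx0 : hnorm x - ce <= hnorm x0).
    { pose proof (hnorm_triangle x0 x1). rewrite <- Ex in H0. lra. }
    assert (Hcube0 : forall t, (forall i, Rabs (t i) < r) -> hnorm (hsub (pi t x0) x0) <= 2 * c + 2 * ce).
    { intros t Ht. rewrite (decomp_eq2 _ x0 x1 (Hun t)). rewrite <- Ex.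
      eapply Rle_trans. apply hnorm_sub_le.
      pose proof (Hcube t Ht). pose proof (hnorm_sub_le (pi t x1) x1).
      rewrite (unit_norm _ _ (Hun t)) in H1. lra. }
    set (C := INR K * (2 * c + 2 * ce)).
    assert (Hall : forall t, hnorm (hsub (pi t x0) x0) <= C).
    { intro t.
      assert (Hz : forall i, exists z : Z, 0 <= t i - IZR z < 1) by (intro; apply frac_decomp).
      assert (Hz' : exists z : Zd d, forall i, 0 <= t i - IZR (z i) < 1).
      { exists (fun i => proj1_sig (constructive_indefinite_description _ (Hz i))).
        intro i. exact (proj2_sig (constructive_indefinite_description _ (Hz i))). }
      destruct Hz' as [z Hzi].
      set (s := fun i => (t i - IZR (z i)) / INR K).
      assert (Ets : t = Rd_add d (nscal d K s) (Zd_to_Rd d z)).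
      { apply functional_extensionality; intro i. unfold Rd_add, nscal, s, Zd_to_Rd. field. lra. }
      assert (Hs : forall i, Rabs (s i) < r).
      { intro i. specialize (Hzi i). unfold s. rewrite Rabs_right.
        - apply Rle_lt_trans with (/ INR K); auto. unfold Rdiv.
          rewrite <- (Rmult_1_l (/ INR K)) at 2. apply Rmult_le_compat_r. left; apply Rinv_0_lt_compat; lra. lra.
        - apply Rle_ge. apply Rmult_le_pos. lra. left; apply Rinv_0_lt_compat; lra. }
      rewrite Ets. pose proof Hpi as (_&_&Hm). rewrite Hm. rewrite (Mx0 z).
      eapply Rle_trans. apply iter_bound. exact Hpi.
      unfold C. apply Rmult_le_compat_l. lra. apply Hcube0. auto. }
    apply (stepB d H pi x0 C); auto.
    + unfold C. assert (0 <= ce) by (unfold ce; unfold Rdiv; apply Rmult_le_pos; [lra|left; apply Rinv_0_lt_compat; lra]). nra.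
    + assert (HcA : c * A < hnorm x).
      { apply Rmult_lt_reg_r with (/ A). apply Rinv_0_lt_compat; auto.
        rewrite Rmult_assoc, Rinv_r by lra. lra. }
      unfold A in HcA. unfold C.
      assert (c * (2 * INR K / eps) = 2 * INR K * ce) by (unfold ce; field; lra).
      assert (c * / eps = ce) by (unfold ce; field; lra).
      nra.
Qed.

Lemma sumFin_le n (f : Fin.t n -> R) m : (forall i, f i <= m) -> sumFin n f <= INR n * m.
Proof.
  revert f. induction n; intros f Hf.
  - simpl. lra.
  - simpl sumFin. rewrite S_INR. specialize (IHn (fun i => f (Fin.FS i)) (fun i => Hf _)).
    specialize (Hf Fin.F1). lra.
Qed.

Lemma cube_ball d (Hd : (1 <= d)%nat) (u : Rd d) delta : 0 < delta ->
  (forall i, Rabs (u i) < delta / INR d) -> Rd_norm d u < delta.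
Proof.
  intros Hdel Hu. destruct d as [|d']; [lia|].
  assert (HD : 1 <= INR (S d')). { rewrite S_INR. pose proof (pos_INR d'). lra. }
  set (a := delta / INR (S d')).
  assert (Ha : 0 < a) by (unfold a; apply Rdiv_lt_0_compat; lra).
  assert (Hsq : forall i, u i * u i <= a * a).
  { intro i. specialize (Hu i). fold a in Hu.
    assert (E : u i * u i = Rabs (u i) * Rabs (u i)) by (pose proof (Rsqr_abs (u i)); unfold Rsqr in *; lra).
    rewrite E. pose proof (Rabs_pos (u i)). nra. }
  assert (Hsq1 : u Fin.F1 * u Fin.F1 < a * a).
  { specialize (Hu Fin.F1). fold a in Hu.
    assert (E : u Fin.F1 * u Fin.F1 = Rabs (u Fin.F1) * Rabs (u Fin.F1)) by (pose proof (Rsqr_abs (u Fin.F1)); unfold Rsqr in *; lra).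
    rewrite E. pose proof (Rabs_pos (u Fin.F1)). nra. }
  unfold Rd_norm. simpl sumFin.
  pose proof (sumFin_le d' (fun i => u (Fin.FS i) * u (Fin.FS i)) (a * a) (fun i => Hsq _)) as Hr.
  set (Ssum := u Fin.F1 * u Fin.F1 + sumFin d' (fun i => u (Fin.FS i) * u (Fin.FS i))).
  assert (HS : Ssum < delta * delta).
  { assert (Ssum < INR (S d') * (a * a)) by (unfold Ssum; rewrite S_INR; lra).
    assert (INR (S d') * (a * a) = delta * delta / INR (S d')) by (unfold a; field; lra).
    assert (delta * delta / INR (S d') <= delta * delta).
    { unfold Rdiv. rewrite <- (Rmult_1_r (delta * delta)) at 2. apply Rmult_le_compat_l. nra.
      rewrite <- Rinv_1. apply Rinv_le_contravar; lra. }
    lra. }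
  destruct (Rle_dec 0 Ssum) as [HS0|HS0].
  - pose proof (sqrt_sqrt Ssum HS0). pose proof (sqrt_pos Ssum).
    destruct (Rlt_dec (sqrt Ssum) delta); auto. nra.
  - rewrite sqrt_neg_0; lra.
Qed.

Lemma part2 d (Hd : (1 <= d)%nat) (Q : Zd d -> Prop) (HQ : KazhdanZ d Q) delta :
  0 < delta -> KazhdanR d (union_img d (ball0 d delta) Q).
Proof.
  intro Hdel. destruct HQ as [eps [Heps HK]].
  assert (HD : 0 < INR d) by (apply lt_0_INR; lia).
  destruct (main_lemma d Q eps Heps HK (delta / INR d) ltac:(apply Rdiv_lt_0_compat; lra)) as [e' [He' Hmain]].
  exists e'. split; auto. intros H pi Hpi _ [x [c [Hc0 [Hcx Hall]]]].
  apply (Hmain H pi Hpi x c); auto.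
  - intros q Qq. apply Hall. right. exists q. auto.
  - intros t Ht. eapply Rle_trans. apply Hall. left. apply cube_ball; auto. lra.
Qed.

Lemma abs_le_inv x y : Rabs x <= y -> -y <= x <= y.
Proof. intro H. pose proof (Rle_abs x). pose proof (Rle_abs (-x)). rewrite Rabs_Ropp in H1. lra. Qed.
Lemma abs_lt_intro x y : -y < x < y -> Rabs x < y.
Proof. intros [A B]. apply Rabs_def1; lra. Qed.

Lemma fin_min n (f : Fin.t n -> R) : (forall i, 0 < f i) -> exists m, 0 < m /\ forall i, m <= f i.
Proof.
  induction n; intro Hf.
  - exists 1. split; [lra|]. intro i. exact (Fin.case0 (fun i => 1 <= f i) i). 
  - destruct (IHn (fun i => f (Fin.FS i)) (fun i => Hf _)) as [m [Hm Hmi]].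
    exists (Rmin (f Fin.F1) m). split.
    + apply Rmin_glb_lt; auto.
    + intro i. apply (Fin.caseS' i (fun i => Rmin (f Fin.F1) m <= f i)).
      * apply Rmin_l.
      * intro j. eapply Rle_trans. apply Rmin_r. apply Hmi.
Qed.

Definition step_prop d (W : nat -> Rd d -> Prop) N (pr pr' : Rd d * R) : Prop :=
  0 < snd pr -> 0 < snd pr' /\ (forall i, Rabs (fst pr' i - fst pr i) + snd pr' <= snd pr) /\
    (forall w, W N w -> exists i, snd pr' < Rabs (w i - fst pr' i)).

Lemma baire d (W : nat -> Rd d -> Prop) :
  (forall x : Rd d, exists n, (1 <= n)%nat /\ W n x) ->
  exists N p r, (1 <= N)%nat /\ 0 < r /\ forall t : Rd d, (forall i, Rabs (t i - p i) < r) ->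
    forall eta, 0 < eta -> exists w, W N w /\ forall i, Rabs (w i - t i) < eta.
Proof.
  intro Hcov. apply NNPP. intro Hno.
  assert (Hstep : forall N pr, (1 <= N)%nat -> exists pr', step_prop d W N pr pr').
  { intros N [p r] HN. destruct (Rlt_dec 0 r) as [Hr|Hr].
    2:{ exists (p, r). intro; simpl in *; lra. }
    assert (Hex : exists t : Rd d, (forall i, Rabs (t i - p i) < r) /\ exists eta, 0 < eta /\
                    forall w, W N w -> exists i, eta <= Rabs (w i - t i)).
    { apply NNPP. intro C. apply Hno. exists N, p, r. split; auto. split; auto.
      intros t Ht eta Heta. apply NNPP. intro C2. apply C. exists t. split; auto.
      exists eta. split; auto. intros w Ww. apply NNPP. intro C3. apply C2. exists w. split; auto.
      intro i. destruct (Rlt_dec (Rabs (w i - t i)) eta); auto. exfalso. apply C3. exists i. lra. }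
    destruct Hex as [t [Ht [eta [Heta Hw]]]].
    destruct (fin_min d (fun i => r - Rabs (t i - p i))) as [m [Hm Hmi]].
    { intro i. specialize (Ht i). lra. }
    set (r' := Rmin eta m / 2).
    assert (Hr'0 : 0 < r') by (unfold r'; assert (0 < Rmin eta m) by (apply Rmin_glb_lt; auto); lra).
    assert (Hr'1 : r' < eta) by (unfold r'; pose proof (Rmin_l eta m); lra).
    assert (Hr'2 : r' <= m) by (unfold r'; pose proof (Rmin_r eta m); pose proof (Rmin_glb_lt eta m 0); lra).
    exists (t, r'). intros _. simpl. split; auto. split.
    - intro i. specialize (Hmi i). simpl in Hmi. lra.
    - intros w Ww. destruct (Hw w Ww) as [i Hi]. exists i. lra. }
  assert (Hstep' : forall k pr, exists pr', step_prop d W (S k) pr pr').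
  { intros k pr. apply Hstep. lia. }
  set (F := fun k pr => proj1_sig (constructive_indefinite_description _ (Hstep' k pr))).
  assert (HF : forall k pr, step_prop d W (S k) pr (F k pr)).
  { intros k pr. exact (proj2_sig (constructive_indefinite_description _ (Hstep' k pr))). }
  set (seq := fix seq (k : nat) : Rd d * R := match k with
                | O => (Rd_zero d, 1) | S k' => F k' (seq k') end).
  assert (Hpos : forall k, 0 < snd (seq k)).
  { induction k. simpl. lra. simpl. apply (HF k (seq k) IHk). }
  assert (Hnest : forall k i, Rabs (fst (seq (S k)) i - fst (seq k) i) + snd (seq (S k)) <= snd (seq k)).
  { intros k i. apply (HF k (seq k) (Hpos k)). }
  set (a := fun i k => fst (seq k) i - snd (seq k)).
  set (b := fun i k => fst (seq k) i + snd (seq k)).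
  assert (Hmon : forall i k m, (k <= m)%nat -> a i k <= a i m /\ b i m <= b i k).
  { intros i k m Hkm. induction Hkm. lra.
    assert (Habs : Rabs (fst (seq (S m)) i - fst (seq m) i) <= snd (seq m) - snd (seq (S m))) by (specialize (Hnest m i); lra).
    apply abs_le_inv in Habs. unfold a, b in *. lra. }
  assert (Hab : forall i k j, a i k <= b i j).
  { intros i k j. destruct (Hmon i k (max k j) ltac:(lia)) as [A1 _].
    destruct (Hmon i j (max k j) ltac:(lia)) as [_ B1].
    pose proof (Hpos (max k j)). unfold a, b in *. lra. }
  assert (Hq : forall i, exists v, is_lub (fun v => exists k, v = a i k) v).
  { intro i. destruct (completeness (fun v => exists k, v = a i k)) as [v Hv].
    - exists (b i 0%nat). intros v [k ->]. apply Hab.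
    - exists (a i 0%nat). exists 0%nat. auto.
    - exists v; exact Hv. }
  set (q := fun i => proj1_sig (constructive_indefinite_description _ (Hq i))).
  assert (Hqi : forall i k, Rabs (q i - fst (seq k) i) <= snd (seq k)).
  { intros i k. pose proof (proj2_sig (constructive_indefinite_description _ (Hq i))) as [U L].
    fold (q i) in U, L.
    assert (a i k <= q i) by (apply U; exists k; auto).
    assert (q i <= b i k) by (apply L; intros v [j ->]; apply Hab).
    unfold a, b in *. apply Rabs_le. lra. }
  destruct (Hcov q) as [n [Hn Wq]].
  destruct n as [|k]; [lia|].
  destruct (HF k (seq k) (Hpos k)) as (_&_&Hdisj).
  destruct (Hdisj q Wq) as [i Hi]. specialize (Hqi i (S k)). simpl in Hqi. lra.
Qed.

Lemma le_of_eps a c : (forall e, 0 < e -> a <= c + e) -> a <= c.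
Proof. intro H. destruct (Rle_dec a c); auto. specialize (H ((a - c)/2)). lra. Qed.

Lemma part1 d (Hd : (1 <= d)%nat) (Q : Zd d -> Prop) (HQ : KazhdanZ d Q)
  (W : nat -> Rd d -> Prop) :
  (forall x : Rd d, exists n, (1 <= n)%nat /\ W n x) ->
  exists n, (1 <= n)%nat /\ KazhdanR d (union_img d (W n) Q).
Proof.
  intro Hcov. destruct (baire d W Hcov) as [N [p [r [HN [Hr Hcl]]]]].
  destruct HQ as [eps [Heps HK]].
  assert (HD : 0 < INR d) by (apply lt_0_INR; lia).
  destruct (main_lemma d Q eps Heps HK r Hr) as [e' [He' Hmain]].
  exists N. split; auto. exists e'. split; auto.
  intros H pi Hpi Hcont [x [c [Hc0 [Hcx Hall]]]].
  assert (Hun : forall g, unitary H (pi g)) by apply Hpi.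
  pose proof Hpi as (_&Hid&Hm).
  assert (Hcube : forall g, (forall i, Rabs (g i - p i) < r) -> hnorm (hsub (pi g x) x) <= c).
  { intros g Hg. apply le_of_eps. intros e He.
    destruct (Hcont x g e He) as [delta [Hdel Hdelta]].
    destruct (Hcl g Hg (delta / INR d) ltac:(apply Rdiv_lt_0_compat; lra)) as [w [Ww Hw]].
    assert (Hwn : Rd_norm d (Rd_sub d w g) < delta) by (apply cube_ball; auto).
    specialize (Hdelta w Hwn).
    assert (Hwx : hnorm (hsub (pi w x) x) <= c) by (apply Hall; left; auto).
    pose proof (dist_tri (pi g x) (pi w x) x). rewrite hnorm_subC in Hdelta. lra. }
  apply (Hmain H pi Hpi x c); auto.
  - intros q Qq. apply Hall. right. exists q. auto.
  - intros t Ht.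
    set (g1 := Rd_add d p t).
    assert (Et : t = Rd_add d g1 (Rd_opp d p)).
    { unfold g1, Rd_add, Rd_opp. apply functional_extensionality; intro i. ring. }
    assert (Hg1 : hnorm (hsub (pi g1 x) x) <= c).
    { apply Hcube. intro i. unfold g1, Rd_add. replace (p i + t i - p i) with (t i) by ring. auto. }
    assert (Hp : hnorm (hsub (pi p x) x) <= c).
    { apply Hcube. intro i. replace (p i - p i) with 0 by ring. rewrite Rabs_R0. auto. }
    assert (Hpp : pi p (pi (Rd_opp d p) x) = x).
    { rewrite <- Hm. replace (Rd_add d p (Rd_opp d p)) with (Rd_zero d). apply Hid.
      unfold Rd_add, Rd_opp, Rd_zero. apply functional_extensionality; intro i. ring. }
    assert (Hop : hnorm (hsub (pi (Rd_opp d p) x) x) <= c).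
    { rewrite <- (unit_dist _ _ _ (Hun p)), Hpp, hnorm_subC. auto. }
    rewrite Et, Hm. eapply Rle_trans. apply (dist_tri _ (pi g1 x)).
    rewrite (unit_dist _ _ _ (Hun g1)). lra.
Qed.

Theorem propositionD (d : nat) (Hd : (1 <= d)%nat) (Q : Zd d -> Prop)
  (HQ : KazhdanZ d Q) :
  (forall W : nat -> (Rd d -> Prop),
     (forall n, (1 <= n)%nat -> forall x, W n x -> W (S n) x) ->
     (forall x : Rd d, exists n, (1 <= n)%nat /\ W n x) ->
     exists n, (1 <= n)%nat /\ KazhdanR d (union_img d (W n) Q)) /\
  (forall delta : R, 0 < delta -> KazhdanR d (union_img d (ball0 d delta) Q)).
Proof.
  split.
  - intros W _ Hcov. apply part1; auto.
  - intros delta Hdel. apply part2; auto.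
Qed.
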